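(* Let $P=\{p_1,\dots,p_n\}$ be a set of $n$ distinct points in the plane and, for $\varepsilon>0$, let $f$ be the stacking order of $\mathcal{D}(\varepsilon P)$ given by $f(D(\varepsilon p_i))=i$ for $i=1,\dots,n$. Then $$\lim_{\varepsilon\to 0}\mathrm{vis}(\mathcal{D}(\varepsilon P),f)=\sum_{i=1}^n \tau_i,$$ where $\tau_1=2\pi$, and for $i\ge 2$: $\tau_i=0$ if $p_i\in\mathrm{conv}\{p_1,\dots,p_{i-1}\}$, and otherwise $\tau_i$ is the external angle of the convex set $\mathrm{conv}\{p_1,\dots,p_i\}$ at its vertex $p_i$.
   Context: For a point $p$ in the plane, $D(p)$ denotes the closed disk of radius $1$ centered at $p$, and for a finite point set $Q$, $\mathcal{D}(Q)=\{D(q): q\in Q\}$; $\varepsilon P=\{\varepsilon p: p\in P\}$ where $\varepsilon(x,y)=(\varepsilon x,\varepsilon y)$. A stacking order of a finite collection $\mathcal{D}$ of $n$ distinct unit disks is a bijection $f:\mathcal{D}\to\{1,\dots,n\}$; $f(D)$ is regarded as the height of $D$, and the arrangement is viewed from below. A point $x$ on the boundary circle of $D\in\mathcal{D}$ is visible if $x$ does not lie in any disk $D'\in\mathcal{D}$ with $f(D')<f(D)$. The visible perimeter $\mathrm{vis}(\mathcal{D},f)$ is the total length of all visible boundary points, summed over all disks. The external angle at a vertex $p_i$ is $\pi$ minus the interior angle at $p_i$; equivalently, it is the angle between the outward unit normals of the two sides meeting at $p_i$. If $\mathrm{conv}\{p_1,\dots,p_i\}$ is a segment with endpoint $p_i$,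 the external angle at $p_i$ is $\pi$. *)

(* Defs.v *)
From HB Require Import structures.
From mathcomp Require Import all_boot all_order all_algebra.
From mathcomp Require Import all_classical all_reals all_analysis.
Set Implicit Arguments. Unset Strict Implicit. Unset Printing Implicit Defensive.
Import Order.TTheory GRing.Theory Num.Theory.
Import numFieldNormedType.Exports.
Local Open Scope classical_set_scope.
Local Open Scope ring_scope.

Section Defs.
Variable R : realType.

Definition pt := (R * R)%type.

Definition in_disk (c x : pt) : Prop := (x.1 - c.1) ^+ 2 + (x.2 - c.2) ^+ 2 <= 1.

Definition circ (c : pt) (t : R) : pt := (c.1 + cos t, c.2 + sin t).

Definition scale (e : R) (p : pt) : pt := (e * p.1, e * p.2).

(* Disks D(c_0), ..., D(c_{n-1}) with stacking order f(D(c_i)) = i (0-indexed).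
   Parameter set of the visible part of the boundary of D(c_i): the points not
   lying in any disk of smaller height. *)
Definition visible_params n (c : 'I_n -> pt) (i : 'I_n) : set R :=
  [set t | 0 <= t < 2 * pi /\
           forall j : 'I_n, (j < i)%N -> ~ in_disk (c j) (circ (c i) t)].

(* visible perimeter: total arc length (= Lebesgue measure of the parameter
   set, radius 1) of the visible boundary points, summed over all disks *)
Definition vis n (c : 'I_n -> pt) : \bar R :=
  (\sum_(i < n) (@lebesgue_measure R) (visible_params c i))%E.

Definition in_conv_prefix n (p : 'I_n -> pt) (i : nat) (x : pt) : Prop :=
  exists w : 'I_n -> R,
    [/\ forall j : 'I_n, 0 <= w j,
        forall j : 'I_n, ~~ (j < i)%N -> w j = 0,
        \sum_(j < n) w j = 1
      & x = (\sum_(j < n) w j * (p j).1, \sum_(j < n) w j * (p j).2)].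

Definition norm2 (u : pt) : R := Num.sqrt (u.1 ^+ 2 + u.2 ^+ 2).

Definition vangle (u v : pt) : R :=
  acos ((u.1 * v.1 + u.2 * v.2) / (norm2 u * norm2 v)).

Definition vsub (x y : pt) : pt := (x.1 - y.1, x.2 - y.2).

(* Interior angle of conv {p_0, ..., p_i} at the vertex p_i (assuming p_i is not
   in conv {p_0,...,p_{i-1}}): the largest angle subtended at p_i by two of the
   points p_j, p_k (j, k < i); this is the angle between the two edges of the
   hull at p_i, and it is 0 when the hull is a segment with endpoint p_i. *)
Definition interior_angle n (p : 'I_n -> pt) (i : 'I_n) : R :=
  \big[Num.max/0]_(j < n | (j < i)%N)
    \big[Num.max/0]_(k < n | (k < i)%N)
      vangle (vsub (p j) (p i)) (vsub (p k) (p i)).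

(* tau_i (0-indexed: index 0 is the paper's p_1) *)
Definition tau n (p : 'I_n -> pt) (i : 'I_n) : R :=
  if (i : nat) == 0%N then 2 * pi
  else if `[< in_conv_prefix p i (p i) >] then 0
  else pi - interior_angle p i.

End Defs.

(* Main.v *)
Require Import Defs.
From HB Require Import structures.
From mathcomp Require Import all_boot all_order all_algebra.
From mathcomp Require Import all_classical all_reals all_analysis.
From mathcomp Require Import ring lra measurable_realfun.
Import Order.TTheory GRing.Theory Num.Theory.
Import numFieldNormedType.Exports.
Local Open Scope classical_set_scope.
Local Open Scope ring_scope.

Set Implicit Arguments. Unset Strict Implicit. Unset Printing Implicit Defensive.

Section H1.
Variable R : realType.

Definition dotp a b : R := a.1*b.1 + a.2*b.2.
Definition crp a b : R := a.1*b.2 - a.2*b.1.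

Lemma sq_le (a b : R) : 0 <= a -> b^+2 <= a^+2 -> b <= a.
Proof. move=> a0 h; nra. Qed.

Lemma claimA (c D x q : R) :
  c^+2 + D^+2 = 1 -> x^+2 + q^+2 = 1 -> 0 <= D -> 0 <= q ->
  c <= x -> q*c <= x*D.
Proof.
move=> h1 h2 hD hq hx.
have E : (x*D)^+2 - (q*c)^+2 = x^+2 - c^+2.
  have eD : D^+2 = 1 - c^+2 by lra.
  have eq : q^+2 = 1 - x^+2 by lra.
  rewrite !exprMn eD eq; ring.
have [c0|c0] := lerP 0 c.
  apply: sq_le; first by nra.
  nra.
have [x0|x0] := lerP 0 x.
  nra.
have : - (x * D) <= - (q*c). apply: sq_le; first by nra. rewrite !sqrrN; nra.
lra.
Qed.

Lemma claimD (c D x q : R) :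
  c^+2 + D^+2 = 1 -> x^+2 + q^+2 = 1 -> 0 <= D ->
  c <= x -> c <= x*c + q*D -> 0 <= q * (x*D - q*c).
Proof.
move=> h1 h2 hD hx hy.
have [q0|q0] := lerP 0 q.
  have := claimA h1 h2 hD q0 hx; nra.
have [q2|q2] := lerP 0 (x*D - q*c).
  have h3 : (x*c+q*D)^+2 + (x*D-q*c)^+2 = 1.
    have -> : (x*c+q*D)^+2 + (x*D-q*c)^+2 = (x^+2+q^+2)*(c^+2+D^+2) by ring.
    by rewrite h1 h2 mulr1.
  have := claimA h1 h3 hD q2 hy.
  have k : (x * c + q * D) * D - (x * D - q * c) * c = q * (c^+2 + D^+2) by ring.
  rewrite h1 mulr1 in k => h; lra.
nra.
Qed.

Lemma claim4 (c D x q : R) :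
  c^+2 + D^+2 = 1 -> x^+2 + q^+2 = 1 ->
  c <= x -> c <= x*c + q*D -> 0 <= q * (x*D - q*c).
Proof.
move=> h1 h2 hx hy.
have [D0|D0] := lerP 0 D; first exact: claimD.
have := @claimD c (-D) x (-q).
rewrite !sqrrN => /(_ h1 h2).
have -> : x * c + - q * - D = x*c + q*D by ring.
have -> : - q * (x * - D - - q * c) = q * (x*D - q*c) by ring.
move=> /(_ _ hx hy); apply; lra.
Qed.

Lemma claim_vec (e1 e2 v : (R*R)%type) : dotp e1 e1 = 1 -> dotp e2 e2 = 1 -> dotp v v = 1 ->
  dotp e1 e2 <= dotp v e1 -> dotp e1 e2 <= dotp v e2 ->
  0 <= crp e1 v * crp v e2.
Proof.
move: e1 e2 v => [a1 a2] [b1 b2] [v1 v2]; rewrite /dotp /crp /= => h1 h2 h3 hx hy.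
have := @claim4 (a1*b1+a2*b2) (a1*b2-a2*b1) (v1*a1+v2*a2) (a1*v2-a2*v1).
have e1' : (a1 * b1 + a2 * b2) ^+ 2 + (a1 * b2 - a2 * b1) ^+ 2 =
  (a1*a1+a2*a2)*(b1*b1+b2*b2) by ring.
have e2' : (v1 * a1 + v2 * a2) ^+ 2 + (a1 * v2 - a2 * v1) ^+ 2 =
  (v1*v1+v2*v2)*(a1*a1+a2*a2) by ring.
have e3 : (v1 * a1 + v2 * a2) * (a1 * b1 + a2 * b2) + (a1 * v2 - a2 * v1) * (a1 * b2 - a2 * b1)
   = (a1*a1+a2*a2) * (v1*b1+v2*b2) by ring.
have e4 : (v1 * a1 + v2 * a2) * (a1 * b2 - a2 * b1) - (a1 * v2 - a2 * v1) * (a1 * b1 + a2 * b2)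
   = (a1*a1+a2*a2) * (v1*b2-v2*b1) by ring.
rewrite e1' e2' e3 e4 h1 h2 h3 !mul1r; apply => //; ring.
Qed.

End H1.

Section H2.
Variable R : realType.

Lemma cone_dichot (e1 e2 v : (R*R)%type) :
  dotp e1 e1 = 1 -> dotp e2 e2 = 1 -> dotp v v = 1 -> -1 < dotp e1 e2 ->
  dotp e1 e2 <= dotp v e1 -> dotp e1 e2 <= dotp v e2 ->
  (exists l0 l1 l2 : R, [/\ 0 < l0, 0 <= l1, 0 <= l2 &
      (l0 * v.1 + l1 * e1.1 + l2 * e2.1 = 0 /\ l0 * v.2 + l1 * e1.2 + l2 * e2.2 = 0)])
  \/ (forall w : (R*R)%type, 0 <= dotp w e1 -> 0 <= dotp w e2 -> 0 <= dotp w v).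
Proof.
move=> h1 h2 h3 hc hx hy.
have AB := claim_vec h1 h2 h3 hx hy.
move: e1 e2 v h1 h2 h3 hc hx hy AB => [a1 a2] [b1 b2] [v1 v2].
rewrite /dotp /crp /= => h1 h2 h3 hc hx hy AB.
set D := a1*b2 - a2*b1.
set A := v1*b2 - v2*b1.
set B := a1*v2 - a2*v1.
have iv1 : D * v1 = A * a1 + B * b1 by rewrite /D /A /B; ring.
have iv2 : D * v2 = A * a2 + B * b2 by rewrite /D /A /B; ring.
have hcD : (a1*b1+a2*b2)^+2 + D^+2 = 1.
  have -> : (a1*b1+a2*b2)^+2 + D^+2 = (a1*a1+a2*a2)*(b1*b1+b2*b2) by rewrite /D; ring.
  by rewrite h1 h2 mulr1.
have [D0|D0] := eqVneq D 0.
  rewrite D0 expr0n /= addr0 in hcD.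
  have c1 : a1*b1+a2*b2 = 1.
    have : (a1*b1+a2*b2 - 1) * (a1*b1+a2*b2 + 1) = 0 by nra.
    move/eqP; rewrite mulf_eq0 => /orP[/eqP|/eqP]; lra.
  have ev : (v1 - a1)^+2 + (v2 - a2)^+2 = 0.
    have k : (v1 - a1)^+2 + (v2 - a2)^+2 = (v1*v1+v2*v2) + (a1*a1+a2*a2) - 2*(v1*a1+v2*a2) by ring.
    rewrite h1 h3 in k. apply/eqP; rewrite eq_le; apply/andP; split.
      rewrite k; lra.
    by rewrite addr_ge0 ?sqr_ge0.
  have q1 := sqr_ge0 (v1-a1); have q2 := sqr_ge0 (v2-a2).
  have [ev1 ev2] : v1 = a1 /\ v2 = a2.
    split; apply/eqP; rewrite -subr_eq0 -sqrf_eq0; apply/eqP; lra.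
  right => w; rewrite ev1 ev2 => //.
have DD : 0 < D^+2 by rewrite lt_def sqrf_eq0 D0 sqr_ge0.
have AB' : 0 <= (A*D)*(B*D).
  have -> : (A*D)*(B*D) = (B*A)*D^+2 by ring.
  by apply: mulr_ge0; [exact: AB | exact: sqr_ge0].
have eqs : D^+2*v1 + -(A*D)*a1 + -(B*D)*b1 = 0 /\ D^+2*v2 + -(A*D)*a2 + -(B*D)*b2 = 0.
  split.
    have -> : D ^+ 2 * v1 + - (A * D) * a1 + - (B * D) * b1 = D * (D*v1 - A*a1 - B*b1) by ring.
    by rewrite iv1; ring.
  have -> : D ^+ 2 * v2 + - (A * D) * a2 + - (B * D) * b2 = D * (D*v2 - A*a2 - B*b2) by ring.
  by rewrite iv2; ring.
case: (boolP ((0 <= A*D) && (0 <= B*D))) => [/andP[ADp BDp]|hn].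
  right => -[w1 w2] /= hw1 hw2.
  have : D^+2 * (w1*v1+w2*v2) = A*D*(w1*a1+w2*a2) + B*D*(w1*b1+w2*b2).
    have -> : D^+2 * (w1*v1+w2*v2) = D * (w1 * (D*v1) + w2*(D*v2)) by ring.
    rewrite iv1 iv2; ring.
  move=> k. have : 0 <= D^+2 * (w1*v1+w2*v2) by rewrite k; nra.
  by rewrite pmulr_rge0.
left; exists (D^+2), (-(A*D)), (-(B*D)); split => //.
  by move: hn; rewrite negb_and -!ltNge => /orP[h|h]; nra.
by move: hn; rewrite negb_and -!ltNge => /orP[h|h]; nra.
Qed.

Lemma two_half (e1 e2 w : (R*R)%type) :
  dotp e1 e1 = 1 -> dotp e2 e2 = 1 -> dotp w w = 1 -> -1 < dotp e1 e2 ->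
  (0 <= dotp w e1 /\ 0 <= dotp w e2) <->
  Num.sqrt (1 - dotp e1 e2 ^+ 2) <= dotp w e1 + dotp w e2.
Proof.
move=> h1 h2 h3 hc.
have G : (dotp w e1)^+2 + (dotp w e2)^+2 - 2 * (dotp w e1) * (dotp w e2) * dotp e1 e2
   = 1 - dotp e1 e2 ^+ 2.
  move: e1 e2 w h1 h2 h3 {hc} => [a1 a2] [b1 b2] [w1 w2]; rewrite /dotp /= => h1 h2 h3.
  have k : (w1 * a1 + w2 * a2) ^+ 2 * (b1*b1+b2*b2) + (w1 * b1 + w2 * b2) ^+ 2 * (a1*a1+a2*a2) -
    2 * (w1 * a1 + w2 * a2) * (w1 * b1 + w2 * b2) * (a1 * b1 + a2 * b2) =
     (w1*w1+w2*w2) * ((a1*a1+a2*a2)*(b1*b1+b2*b2) - (a1 * b1 + a2 * b2) ^+ 2) by ring.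
  by rewrite h1 h2 h3 !mulr1 !mul1r in k.
have c1 : dotp e1 e2 ^+ 2 <= 1.
  move: e1 e2 h1 h2 {G hc} => [a1 a2] [b1 b2]; rewrite /dotp /= => h1 h2.
  have k : (a1*b1+a2*b2)^+2 + (a1*b2-a2*b1)^+2 = (a1*a1+a2*a2)*(b1*b1+b2*b2) by ring.
  rewrite h1 h2 mulr1 in k. have := sqr_ge0 (a1*b2-a2*b1). lra.
set S := Num.sqrt _.
have S0 : 0 <= S by exact: sqrtr_ge0.
have SS : S^+2 = 1 - dotp e1 e2 ^+ 2 by rewrite sqr_sqrtr // subr_ge0.
move: G; set a := dotp w e1; set b := dotp w e2; set c := dotp e1 e2 => G.
split.
  move=> [a0 b0]; apply: sq_le; first by lra.
  have hc' : 0 <= c + 1 by move: hc; rewrite /c; lra.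
  have := mulr_ge0 (mulr_ge0 a0 b0) hc'.
  rewrite SS -G; nra.
move=> h; split.
  apply/negP => /negP; rewrite -ltNge => a0.
  have b0 : 0 < b by lra.
  have ab : a * b < 0 by nra.
  have abc : a*b*(c+1) < 0 by move: hc; rewrite /c =>hc; nra.
  have : (a+b)^+2 < S^+2 by rewrite SS -G; nra.
  nra.
apply/negP => /negP; rewrite -ltNge => b0.
have a0 : 0 < a by lra.
have ab : a * b < 0 by nra.
  have abc : a*b*(c+1) < 0 by move: hc; rewrite /c =>hc; nra.
  have : (a+b)^+2 < S^+2 by rewrite SS -G; nra.
nra.
Qed.

End H2.

Section H3.
Variable R : realType.
Notation mu := (@lebesgue_measure R).

Lemma cont_lin (a b : R) : continuous (fun t : R => cos t * a + sin t * b).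
Proof.
move=> x; apply: cvgD; apply: cvgM; first exact: continuous_cos.
- exact: cvg_cst.
- exact: continuous_sin.
- exact: cvg_cst.
Qed.

Lemma mpre (f : R -> R) (Y : set R) : continuous f -> measurable Y ->
  measurable (f @^-1` Y).
Proof.
move=> cf mY; rewrite -[f @^-1` Y]setTI.
exact: (continuous_measurable_fun cf) measurableT Y mY.
Qed.

Lemma meas_ge (f : R -> R) (c : R) : continuous f -> measurable [set x | c <= f x].
Proof.
move=> cf; have -> : [set x | c <= f x] = f @^-1` `[c, +oo[.
  by apply/seteqP; split => x /=; rewrite in_itv /= andbT.
exact: mpre.
Qed.

Lemma meas_gt (f : R -> R) (c : R) : continuous f -> measurable [set x | c < f x].
Proof.
move=> cf; have -> : [set x | c < f x] = f @^-1` `]c, +oo[.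
  by apply/seteqP; split => x /=; rewrite in_itv /= andbT.
exact: mpre.
Qed.

Lemma meas_win (a b : R) : measurable [set x : R | a <= x < b].
Proof.
have -> : [set x : R | a <= x < b] = `[a, b[%classic by apply/seteqP; split => x /=; rewrite in_itv.
exact: measurable_itv.
Qed.

Section shift.
Variable a : R.
Definition shiftf (x : R) := x + a.
Lemma cont_shift : continuous shiftf.
Proof. move=> x; apply: cvgD; [exact: cvg_id | exact: cvg_cst]. Qed.
Lemma mshift : measurable_fun setT shiftf.
Proof. exact: continuous_measurable_fun cont_shift. Qed.
Definition smu (A : set (measurableTypeR R)) : \bar R := mu (shiftf @^-1` A).
Let smu0 : smu set0 = 0%E.
Proof. by rewrite /smu preimage_set0 measure0. Qed.
Let smu_ge0 A : (0 <= smu A)%E.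
Proof. exact: measure_ge0. Qed.
Let smu_sigma_additive : semi_sigma_additive smu.
Proof.
move=> F mF tF mUF; rewrite /smu preimage_bigcup.
apply: measure_semi_sigma_additive.
- by move=> n; rewrite -[X in measurable X]setTI; exact: (mshift measurableT (mF n)).
- apply/trivIsetP => /= i j _ _ ij; rewrite -preimage_setI.
  by move/trivIsetP : tF => /(_ _ _ _ _ ij) ->; rewrite ?preimage_set0.
- by rewrite -preimage_bigcup -[X in measurable X]setTI; exact: (mshift measurableT mUF).
Qed.
HB.instance Definition _ := isMeasure.Build _ _ _
  smu smu0 smu_ge0 smu_sigma_additive.

Lemma shift_measure (A : set R) : measurable A -> mu (shiftf @^-1` A) = mu A.
Proof.
move=> mA; rewrite -/(smu A); apply/esym.
apply: (lebesgue_measure_unique (mu := smu)) => // X [[x y] _ <-].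
rewrite /= /smu.
have -> : shiftf @^-1` `]x, y] = `](x - a), (y - a)]%classic.
  apply/seteqP; split => z /=; rewrite !in_itv /= /shiftf; 
  move=> /andP[h1 h2]; apply/andP; split; lra.
rewrite !lebesgue_measure_itv /=.
rewrite !lte_fin ltrD2r; case: ifP => // _.
by rewrite -!EFinD; congr (_%:E); ring.
Qed.
End shift.

End H3.

Section H4.
Variable R : realType.
Notation mu := (@lebesgue_measure R).

Definition Win (S : set R) (a b : R) := [set x | a <= x < b /\ S x].

Lemma meas_Win S a b : measurable S -> measurable (Win S a b).
Proof.
move=> mS; have -> : Win S a b = [set x | a <= x < b] `&` S by [].
exact: measurableI (meas_win a b) mS.
Qed.

Lemma Win_split S a b c : a <= b <= c -> measurable S ->
  mu (Win S a c) = (mu (Win S a b) + mu (Win S b c))%E.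
Proof.
move=> /andP[ab bc] mS; rewrite -measureU; try exact: meas_Win.
  congr (mu _); apply/seteqP; split => x /=.
    move=> [/andP[h1 h2] Sx]; have [xb|xb] := ltP x b.
      by left; split => //; apply/andP; split.
    by right; split => //; apply/andP; split.
  by move=> [][/andP[h1 h2] Sx]; split => //; apply/andP; split; lra.
by apply/seteqP; split => x //= [[/andP[_ h1] _] [/andP[h2 _] _]]; lra.
Qed.

Lemma Win_shift S a b c : measurable S ->
  mu (Win S (a + c) (b + c)) = mu (Win (fun x => S (x + c)) a b).
Proof.
move=> mS; rewrite -(shift_measure c); last exact: meas_Win.
congr (mu _); apply/seteqP; split => x; rewrite /Win /shiftf /=.
  move=> [/andP[h1 h2] Sx]; split => //.
  apply/andP; split; lra.
move=> [/andP[h1 h2] Sx]; split => //.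
apply/andP; split; lra.
Qed.

Lemma Win_period S (T : R) a b : measurable S -> (forall x, S (x + T) = S x) ->
  0 <= T -> a <= b <= a + T ->
  mu (Win S a (a + T)) = mu (Win S b (b + T)).
Proof.
move=> mS per T0 /andP[ab bT].
have k1 : a <= b <= a + T by apply/andP; split.
have k2 : b <= a + T <= b + T by apply/andP; split; lra.
rewrite (Win_split k1 mS) (Win_split k2 mS).
rewrite addeC; congr (_ + _)%E.
rewrite Win_shift //.
congr (mu _); apply/seteqP; split => x; rewrite /Win /=;
  by move=> [h1 h2]; split => //; rewrite ?per in h2 *.
Qed.

End H4.

Section H5.
Variable R : realType.
Notation mu := (@lebesgue_measure R).

Lemma polar (m : (R*R)%type) : dotp m m = 1 ->
  exists psi : R, [/\ -pi <= psi <= pi, cos psi = m.1 & sin psi = m.2].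
Proof.
move: m => [m1 m2]; rewrite /dotp /= => h.
have m1b : m1 \in `[-1, 1].
  rewrite in_itv /=; apply/andP; split; nra.
have e2 : Num.sqrt (1 - m1^+2) = `|m2|.
  have -> : 1 - m1^+2 = m2^+2 by rewrite -h; ring.
  exact: sqrtr_sqr.
have m1r : -1 <= m1 <= 1 by move: m1b; rewrite in_itv.
have a0 := acos_ge0 m1r.
have api := acos_lepi m1r.
have [m20|m20] := lerP 0 m2.
  exists (acos m1); split.
  - apply/andP; split => //; have := pi_ge0 R; lra.
  - exact: acosK.
  - by rewrite sin_acos // e2 ger0_norm.
exists (- acos m1); split.
- apply/andP; split; lra.
- by rewrite cosN acosK.
- by rewrite sinN sin_acos // e2 ltr0_norm // opprK.
Qed.

Lemma two_pi : 2 * pi = pi *+ 2 :> R.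
Proof. by rewrite mulr_natl. Qed.

Lemma cos_per (x : R) : cos (x + 2 * pi) = cos x.
Proof. by rewrite two_pi cosD2pi. Qed.

Lemma sin_per (x : R) : sin (x + 2 * pi) = sin x.
Proof. by rewrite two_pi sinD2pi. Qed.

Lemma cos_win (s : R) : 0 <= s <= 1 ->
  Win [set r | s <= cos r] (- pi) (- pi + 2 * pi) = `[- acos s, acos s]%classic.
Proof.
move=> /andP[s0 s1].
have sb : -1 <= s <= 1 by apply/andP; split; lra.
have a0 := acos_ge0 sb.
have api : acos s < pi by apply: acos_ltpi; apply/andP; split => //; lra.
have ca : cos (acos s) = s by apply: acosK; rewrite in_itv /=.
have hp := pi_ge0 R.
apply/seteqP; split => x; rewrite /Win /= in_itv /=.
  move=> [/andP[h1 h2] hc]; rewrite -ler_norml.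
  rewrite leNgt; apply/negP => hx.
  have : cos `|x| < cos (acos s).
    rewrite ltr_cos //; rewrite in_itv /=; apply/andP; split => //; try lra.
    have : `|x| <= pi by rewrite ler_norml; apply/andP; split; lra.
    done.
  by rewrite cos_norm ca; lra.
rewrite -ler_norml => hx; split.
  move: hx; rewrite ler_norml => /andP[h1 h2]; apply/andP; split; lra.
rewrite -cos_norm -ca; rewrite leNgt; apply/negP.
rewrite ltr_cos ?in_itv /= ?a0 ?(ltW api) //; first lra.
apply/andP; split => //; lra.
Qed.

Lemma arc_measure (m : (R*R)%type) (s : R) : dotp m m = 1 -> 0 <= s <= 1 ->
  mu [set t | 0 <= t < 2 * pi /\ s <= dotp (cos t, sin t) m] = (2 * acos s)%:E.
Proof.
move=> hm hs; have [psi [/andP[p1 p2] cp sp]] := polar hm.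
set S := [set r | s <= cos r].
have mS : measurable S by apply: meas_ge; exact: continuous_cos.
have -> : [set t | 0 <= t < 2 * pi /\ s <= dotp (cos t, sin t) m] =
    Win (fun x => S (x + - psi)) 0 (2 * pi).
  apply/seteqP; split => t; rewrite /Win /S /dotp /= cosB cp sp //.
rewrite -Win_shift // add0r (addrC (2 * pi)).
have hp := pi_ge0 R.
rewrite -(@Win_period _ S (2 * pi) (- pi) (- psi)) //; last by apply/andP; split; lra.
- rewrite cos_win // lebesgue_measure_itv /= lte_fin.
  have sb : -1 <= s <= 1 by case/andP: hs => ? ?; apply/andP; split; lra.
  have a0 := acos_ge0 sb.
  case: ifPn => h; first by rewrite -EFinD; congr (_%:E); ring.
  have -> : acos s = 0 by move: h; rewrite -leNgt; lra.
  by rewrite mulr0.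
- by move=> x; rewrite /S /= cos_per.
- lra.
Qed.

End H5.

Section H6.
Variable R : realType.
Notation mu := (@lebesgue_measure R).
Variables (n : nat) (p : 'I_n -> pt R) (i : 'I_n).
Hypothesis pinj : injective p.

Definition dd (j : 'I_n) : (R*R)%type := vsub (p i) (p j).
Definition gg (t : R) (j : 'I_n) : R := dotp (cos t, sin t) (dd j).
Definition nd (j : 'I_n) : R := dotp (dd j) (dd j).

Lemma nd_gt0 (j : 'I_n) : (j < i)%N -> 0 < nd j.
Proof.
move=> ji; have : p j != p i.
  by apply/negP => /eqP /pinj ji'; move: ji; rewrite ji' ltnn.
rewrite /nd /dd /vsub /dotp /=; move: (p i) (p j) => [a1 a2] [b1 b2] /= hne.
have [e1|e1] := eqVneq a1 b1; have [e2|e2] := eqVneq a2 b2.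
- by move: hne; rewrite e1 e2 eqxx.
- have : 0 < (a2 - b2)^+2 by rewrite lt_def sqrf_eq0 subr_eq0 e2 sqr_ge0.
  have := sqr_ge0 (a1 - b1); nra.
- have : 0 < (a1 - b1)^+2 by rewrite lt_def sqrf_eq0 subr_eq0 e1 sqr_ge0.
  have := sqr_ge0 (a2 - b2); nra.
- have : 0 < (a1 - b1)^+2 by rewrite lt_def sqrf_eq0 subr_eq0 e1 sqr_ge0.
  have := sqr_ge0 (a2 - b2); nra.
Qed.

Lemma nd_ge0 (j : 'I_n) : 0 <= nd j.
Proof. rewrite /nd /dotp; have := sqr_ge0 (dd j).1; have := sqr_ge0 (dd j).2; nra. Qed.

Lemma nin_disk (e t : R) (j : 'I_n) : 0 < e ->
  (~ in_disk (scale e (p j)) (circ (scale e (p i)) t)) <-> 0 < 2 * gg t j + e * nd j.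
Proof.
move=> e0; rewrite /in_disk /circ /scale /gg /nd /dd /vsub /dotp /=.
have k : (e * (p i).1 + cos t - e * (p j).1) ^+ 2 + (e * (p i).2 + sin t - e * (p j).2) ^+ 2
  = (cos t ^+2 + sin t ^+ 2) + e * (2 * (cos t * ((p i).1 - (p j).1) + sin t * ((p i).2 - (p j).2))
      + e * (((p i).1 - (p j).1) * ((p i).1 - (p j).1) + ((p i).2 - (p j).2) * ((p i).2 - (p j).2))).
  ring.
rewrite k cos2Dsin2; split.
  move=> h; have : 1 < 1 + e * (2 * (cos t * ((p i).1 - (p j).1) + sin t * ((p i).2 - (p j).2))
      + e * (((p i).1 - (p j).1) * ((p i).1 - (p j).1) + ((p i).2 - (p j).2) * ((p i).2 - (p j).2))).
    by rewrite ltNge; apply/negP.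
  by rewrite ltrDl pmulr_rgt0.
move=> h; apply/negP; rewrite -ltNge ltrDl pmulr_rgt0 //.
Qed.

Definition Vs (e : R) := [set t : R | 0 <= t < 2 * pi /\
  forall j : 'I_n, (j < i)%N -> 0 < 2 * gg t j + e * nd j].
Definition Wset := [set t : R | 0 <= t < 2 * pi /\
  forall j : 'I_n, (j < i)%N -> 0 <= gg t j].

Lemma vis_eq (e : R) : 0 < e -> visible_params (fun k => scale e (p k)) i = Vs e.
Proof.
move=> e0; apply/seteqP; split => t.
  move=> [h1 h2]; split => // j ji.
  by apply/(@nin_disk e t j e0); apply: h2.
move=> [h1 h2]; split => // j ji.
by apply/(@nin_disk e t j e0); apply: h2.
Qed.

Lemma meas_Vs (e : R) : measurable (Vs e).
Proof.
have -> : Vs e = [set t | 0 <= t < 2 * pi] `&`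
   \bigcap_(j in [set j : 'I_n | (j < i)%N]) [set t | 0 < 2 * gg t j + e * nd j].
  by apply/seteqP; split => t [h1 h2]; split => //; move=> j ji; exact: h2 j ji.
apply: measurableI; first exact: meas_win.
apply: fin_bigcap_measurable; first exact: finite_finset.
move=> j _; apply: meas_gt => x; apply: cvgD; last exact: cvg_cst.
by apply: cvgM; [exact: cvg_cst | exact: cont_lin].
Qed.

Lemma meas_W : measurable Wset.
Proof.
have -> : Wset = [set t | 0 <= t < 2 * pi] `&`
   \bigcap_(j in [set j : 'I_n | (j < i)%N]) [set t | 0 <= gg t j].
  by apply/seteqP; split => t [h1 h2]; split => //; move=> j ji; exact: h2 j ji.
apply: measurableI; first exact: meas_win.
apply: fin_bigcap_measurable; first exact: finite_finset.
by move=> j _; apply: meas_ge; exact: cont_lin.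
Qed.

Lemma W_sub_V (e : R) : 0 < e -> Wset `<=` Vs e.
Proof.
move=> e0 t [h1 h2]; split => // j ji.
have := h2 j ji; have := nd_gt0 ji => a b.
have : 0 < e * nd j by exact: mulr_gt0.
lra.
Qed.

Lemma V_mono (e e' : R) : e <= e' -> Vs e `<=` Vs e'.
Proof.
move=> ee t [h1 h2]; split => // j ji.
have := h2 j ji; have := nd_ge0 j => a b.
have : e * nd j <= e' * nd j by apply: ler_wpM2r.
lra.
Qed.

Lemma V_sub_win (e : R) : Vs e `<=` [set t | 0 <= t < 2 * pi].
Proof. by move=> t []. Qed.

Lemma bigcap_V : \bigcap_k Vs (k.+1%:R^-1) = Wset.
Proof.
apply/seteqP; split; last first.
  by move=> t Wt k _; apply: W_sub_V Wt; rewrite invr_gt0.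
move=> t h; have [h1 _] := h 0%N I; split => // j ji.
rewrite leNgt; apply/negP => g0.
have nd0 := nd_gt0 ji.
have hpos : 0 < - 2 * gg t j / nd j by rewrite divr_gt0 //; lra.
have [k hk] := ltr_add_invr hpos.
rewrite add0r in hk.
have hk2 := (h k I).2 j ji.
have : nd j * k.+1%:R^-1 < nd j * (- 2 * gg t j / nd j) by rewrite ltr_pM2l.
rewrite mulrCA divff ?mulr1; last by rewrite gt_eqF.
rewrite mulrC; move: hk2; set z := k.+1%:R^-1 * nd j; set g := gg t j; lra.
Qed.

End H6.

Section H7.
Variable R : realType.
Notation mu := (@lebesgue_measure R).

Lemma mu_win (a b : R) : a <= b -> mu [set t | a <= t < b] = (b - a)%:E.
Proof.
move=> ab; have -> : [set t : R | a <= t < b] = `[a, b[%classic.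
  by apply/seteqP; split => x /=; rewrite in_itv.
rewrite lebesgue_measure_itv /= lte_fin.
case: ifPn => h; first by rewrite EFinB.
have -> : b = a by apply/eqP; rewrite eq_le ab andbT leNgt.
by rewrite subrr.
Qed.

Variables (n : nat) (p : 'I_n -> pt R) (i : 'I_n).
Hypothesis pinj : injective p.

Lemma vis_lim : (fun e => mu (visible_params (fun k => scale e (p k)) i)) @ 0^'+ -->
   mu (Wset p i).
Proof.
set f := fun e => _.
have fE e : 0 < e -> f e = mu (Vs p i e) by move=> e0; rewrite /f vis_eq.
have ndf : {in Interval (BRight (0:R)) +oo%O &, nondecreasing_fun f}.
  move=> x y; rewrite !in_itv /= !andbT => x0 y0 xy.
  rewrite !fE //; apply: le_measure; rewrite ?inE; try exact: meas_Vs.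
  exact: V_mono.
have H := @nondecreasing_at_right_cvge R f 0 +oo%O isT ndf.
suff <- : ereal_inf (f @` [set` Interval (BRight (0:R)) +oo%O]) = mu (Wset p i) by [].
set F := fun k : nat => Vs p i (k.+1%:R^-1).
have cF : mu \o F @ \oo --> mu (Wset p i).
  rewrite -(@bigcap_V _ _ p i pinj).
  apply: nonincreasing_cvg_mu.
  - apply: (le_lt_trans (y := mu [set t : R | 0 <= t < 2 * pi])).
      apply: le_measure; rewrite ?inE; [exact: meas_Vs|exact: meas_win|exact: V_sub_win].
    by rewrite mu_win ?ltry // mulr_ge0 // pi_ge0.
  - by move=> k; exact: meas_Vs.
  - by rewrite (@bigcap_V _ _ p i pinj); exact: meas_W.
  - apply/nonincreasing_seqP => k; apply/subsetPset; apply: V_mono.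
    by rewrite lef_pV2 ?posrE ?ltr0n // ler_nat.
apply/eqP; rewrite eq_le; apply/andP; split.
  apply: (cvge_ge _ cF); apply: nearW => k /=.
  apply: ereal_inf_lbound; exists (k.+1%:R^-1); last by rewrite fE.
  by rewrite /= in_itv /= andbT invr_gt0 ltr0n.
apply: le_ereal_inf_tmp => y [e]; rewrite /= in_itv /= andbT => e0 <-.
rewrite fE //; apply: le_measure; rewrite ?inE; [exact: meas_W|exact: meas_Vs|].
exact: W_sub_V.
Qed.

End H7.

Section H8.
Variable R : realType.

Lemma acos_anti (x y : R) : -1 <= x <= 1 -> -1 <= y <= 1 -> acos x <= acos y -> y <= x.
Proof.
move=> hx hy h; rewrite -(@acosK R x) ?in_itv //= -(@acosK R y) ?in_itv //=.
rewrite leNgt; apply/negP; rewrite ltr_cos ?in_itv /= ?acos_ge0 ?acos_lepi //.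
by rewrite ltNge h.
Qed.

Lemma ifmul (b : bool) (u x : R) : (if b then u else 0) * x = if b then u * x else 0.
Proof. by case: b; rewrite ?mul0r. Qed.

Lemma sum_if1 (m : nat) (a : 'I_m) (F : 'I_m -> R) :
  \sum_(j < m) (if j == a then F j else 0) = F a.
Proof. by rewrite -big_mkcond big_pred1_eq. Qed.

Variables (n : nat) (p : 'I_n -> pt R) (i : 'I_n).
Hypothesis pinj : injective p.

Definition rr (j : 'I_n) : R := Num.sqrt (nd p i j).
Definition ev (j : 'I_n) : (R*R)%type :=
  (((p j).1 - (p i).1) / rr j, ((p j).2 - (p i).2) / rr j).

Lemma rr_gt0 (j : 'I_n) : (j < i)%N -> 0 < rr j.
Proof. by move=> ji; rewrite /rr sqrtr_gt0 (nd_gt0 pinj ji). Qed.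

Lemma rr_sq (j : 'I_n) : rr j ^+ 2 = nd p i j.
Proof. by rewrite /rr sqr_sqrtr // nd_ge0. Qed.

Lemma ev_unit (j : 'I_n) : (j < i)%N -> dotp (ev j) (ev j) = 1.
Proof.
move=> ji; have r0 := rr_gt0 ji; have := rr_sq j.
rewrite /dotp /ev /nd /dd /vsub /dotp /= => h.
have -> : ((p j).1 - (p i).1) / rr j * (((p j).1 - (p i).1) / rr j) +
  ((p j).2 - (p i).2) / rr j * (((p j).2 - (p i).2) / rr j) =
  (((p i).1 - (p j).1) * ((p i).1 - (p j).1) + ((p i).2 - (p j).2) * ((p i).2 - (p j).2)) / rr j ^+ 2.
  by field; rewrite gt_eqF.
by rewrite -h divff // gt_eqF // exprn_gt0.
Qed.

Lemma gg_ev (t : R) (j : 'I_n) : (j < i)%N ->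
  gg p i t j = - rr j * dotp (cos t, sin t) (ev j).
Proof.
move=> ji; have r0 := rr_gt0 ji.
by rewrite /gg /dotp /ev /dd /vsub /=; field; rewrite gt_eqF.
Qed.

Lemma dot_bound (a b : (R*R)%type) : dotp a a = 1 -> dotp b b = 1 -> -1 <= dotp a b <= 1.
Proof.
move: a b => [a1 a2] [b1 b2]; rewrite /dotp /= => h1 h2.
have k : (a1*b1+a2*b2)^+2 + (a1*b2-a2*b1)^+2 = (a1*a1+a2*a2)*(b1*b1+b2*b2) by ring.
rewrite h1 h2 mulr1 in k; have := sqr_ge0 (a1*b2-a2*b1) => h.
apply/andP; split; nra.
Qed.

Lemma vangle_ev (j k : 'I_n) : (j < i)%N -> (k < i)%N ->
  vangle (vsub (p j) (p i)) (vsub (p k) (p i)) = acos (dotp (ev j) (ev k)).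
Proof.
move=> ji ki; have rj := rr_gt0 ji; have rk := rr_gt0 ki.
rewrite /vangle /norm2; congr acos.
have nj : Num.sqrt ((vsub (p j) (p i)).1 ^+ 2 + (vsub (p j) (p i)).2 ^+ 2) = rr j.
  rewrite /rr /nd /dd /vsub /dotp /=; congr Num.sqrt; ring.
have nk : Num.sqrt ((vsub (p k) (p i)).1 ^+ 2 + (vsub (p k) (p i)).2 ^+ 2) = rr k.
  rewrite /rr /nd /dd /vsub /dotp /=; congr Num.sqrt; ring.
rewrite nj nk /dotp /ev /vsub /=; field.
by rewrite !gt_eqF.
Qed.

Lemma conv_of_comb (a b c : 'I_n) (la lb lc : R) :
  (a < i)%N -> (b < i)%N -> (c < i)%N -> 0 <= la -> 0 <= lb -> 0 <= lc ->
  0 < la + lb + lc ->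
  la * (ev a).1 + lb * (ev b).1 + lc * (ev c).1 = 0 ->
  la * (ev a).2 + lb * (ev b).2 + lc * (ev c).2 = 0 ->
  in_conv_prefix p i (p i).
Proof.
move=> ai bi ci la0 lb0 lc0 lpos e1 e2.
have ra := rr_gt0 ai; have rb := rr_gt0 bi; have rc := rr_gt0 ci.
set ma := la / rr a; set mb := lb / rr b; set mc := lc / rr c.
have ma0 : 0 <= ma by rewrite divr_ge0 // ltW.
have mb0 : 0 <= mb by rewrite divr_ge0 // ltW.
have mc0 : 0 <= mc by rewrite divr_ge0 // ltW.
have laE : la = ma * rr a by rewrite /ma divfK // gt_eqF.
have lbE : lb = mb * rr b by rewrite /mb divfK // gt_eqF.
have lcE : lc = mc * rr c by rewrite /mc divfK // gt_eqF.
set M := ma + mb + mc.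
have M0 : 0 < M.
  rewrite lt_def; apply/andP; split; last by rewrite /M; lra.
  apply/negP => /eqP M0.
  have za : ma = 0 by rewrite /M in M0; lra.
  have zb : mb = 0 by rewrite /M in M0; lra.
  have zc : mc = 0 by rewrite /M in M0; lra.
  move: lpos; rewrite laE lbE lcE za zb zc !mul0r; lra.
have E1 : ma * ((p a).1 - (p i).1) + mb * ((p b).1 - (p i).1) + mc * ((p c).1 - (p i).1) = 0.
  rewrite -e1 /ev /ma /mb /mc /=; field; rewrite !gt_eqF //.
have E2 : ma * ((p a).2 - (p i).2) + mb * ((p b).2 - (p i).2) + mc * ((p c).2 - (p i).2) = 0.
  rewrite -e2 /ev /ma /mb /mc /=; field; rewrite !gt_eqF //.
pose w (j : 'I_n) : R := ((if j == a then ma else 0) + (if j == b then mb else 0)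
   + (if j == c then mc else 0)) / M.
exists w; split.
- move=> j; rewrite /w divr_ge0 ?(ltW M0) //.
  by case: (j == a); case: (j == b); case: (j == c); lra.
- move=> j; rewrite -leqNgt => ij; rewrite /w.
  have -> : (j == a) = false by apply/negP => /eqP ja; move: ai; rewrite -ja ltnNge ij.
  have -> : (j == b) = false by apply/negP => /eqP ja; move: bi; rewrite -ja ltnNge ij.
  have -> : (j == c) = false by apply/negP => /eqP ja; move: ci; rewrite -ja ltnNge ij.
  by rewrite !addr0 mul0r.
- rewrite /w -mulr_suml !big_split /= !sum_if1.
  by rewrite -/M divff // gt_eqF.
- have s1 : \sum_(j < n) w j * (p j).1 = (ma * (p a).1 + mb * (p b).1 + mc * (p c).1) / M.
    rewrite /w; under eq_bigr do rewrite mulrAC !mulrDl !ifmul.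
    rewrite !big_split /= !sum_if1; ring.
  have s2 : \sum_(j < n) w j * (p j).2 = (ma * (p a).2 + mb * (p b).2 + mc * (p c).2) / M.
    rewrite /w; under eq_bigr do rewrite mulrAC !mulrDl !ifmul.
    rewrite !big_split /= !sum_if1; ring.
  rewrite s1 s2; move: (p i) E1 E2 => [x y] /= E1 E2.
  congr (_, _).
    have -> : ma * (p a).1 + mb * (p b).1 + mc * (p c).1 = x * M by rewrite /M; lra.
    by rewrite mulfK // gt_eqF.
  have -> : ma * (p a).2 + mb * (p b).2 + mc * (p c).2 = y * M by rewrite /M; lra.
  by rewrite mulfK // gt_eqF.
Qed.

End H8.

Section H9.
Variable R : realType.
Notation mu := (@lebesgue_measure R).

Lemma half_angle (c : R) : -1 < c <= 1 ->
  2 * acos (Num.sqrt (1 - c^+2) / Num.sqrt (2 + 2 * c)) = pi - acos c.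
Proof.
move=> /andP[c1 c2].
have cb : -1 <= c <= 1 by apply/andP; split; lra.
set th := acos c.
have th0 : 0 <= th := acos_ge0 cb.
have thpi : th < pi by apply: acos_ltpi; apply/andP; split.
have cth : cos th = c by apply: acosK; rewrite in_itv /=.
set h := th / 2.
have hth : h *+ 2 = th by rewrite /h -mulr_natr; field.
have hp := pi_gt0 R.
have h0 : 0 <= h by rewrite /h divr_ge0.
have hpi2 : h < pi / 2 by rewrite /h ltr_pM2r //; lra.
have ch : 0 < cos h by apply: cos_gt0_pihalf; apply/andP; split; lra.
have sh : 0 <= sin h by apply: sin_ge0_pi; apply/andP; split => //; lra.
have c2h : c = cos h ^+ 2 *+ 2 - 1 by rewrite -cth -hth cos_mulr2n.
have s2h : sin h ^+ 2 = (1 - c) / 2.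
  by rewrite sin2cos2 [in RHS]c2h; field.
set r := Num.sqrt (1 - c^+2) / Num.sqrt (2 + 2 * c).
have L0 : 0 < Num.sqrt (2 + 2 * c) by rewrite sqrtr_gt0; lra.
have r0 : 0 <= r by rewrite /r divr_ge0 // ?sqrtr_ge0 // ltW.
have r2 : r ^+ 2 = (1 - c) / 2.
  rewrite /r expr_div_n !sqr_sqrtr; first (field; lra).
  - lra.
  - nra.
have rs : r = sin h.
  by apply/eqP; rewrite -(@eqrXn2 _ 2) // r2 s2h.
have e : sin h = cos (pi / 2 - h).
  by rewrite -cosN opprB cosBpihalf.
rewrite rs e cosK; last by rewrite in_itv /=; apply/andP; split; lra.
by rewrite /h; field.
Qed.

Lemma meas_arc (m : (R*R)%type) (s : R) :
  measurable [set t : R | 0 <= t < 2 * pi /\ s <= dotp (cos t, sin t) m].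
Proof.
have -> : [set t : R | 0 <= t < 2 * pi /\ s <= dotp (cos t, sin t) m] =
  [set t | 0 <= t < 2 * pi] `&` [set t | s <= cos t * m.1 + sin t * m.2] by [].
apply: measurableI; first exact: meas_win.
by apply: meas_ge; exact: cont_lin.
Qed.

Lemma sum_lin (m : nat) (w a b : 'I_m -> R) (x y : R) :
  \sum_(j < m) w j * (x * a j + y * b j) =
  x * \sum_(j < m) w j * a j + y * \sum_(j < m) w j * b j.
Proof. rewrite !mulr_sumr -big_split /=; apply: eq_bigr => j _; ring. Qed.

Lemma sum_aff (m : nat) (w a : 'I_m -> R) (c : R) :
  \sum_(j < m) w j * (c - a j) = c * \sum_(j < m) w j - \sum_(j < m) w j * a j.
Proof. rewrite mulr_sumr -sumrB; apply: eq_bigr => j _; ring. Qed.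

Variables (n : nat) (p : 'I_n -> pt R) (i : 'I_n).
Hypothesis pinj : injective p.

Lemma W_i0 : (i : nat) = 0%N -> mu (Wset p i) = (2 * pi)%:E.
Proof.
move=> i0; rewrite -[X in X%:E]subr0 -mu_win ?mulr_ge0 ?pi_ge0 //.
congr (mu _); apply/seteqP; split => t /=; first by case.
by move=> h; split => // j; rewrite i0.
Qed.

Lemma W_conv : in_conv_prefix p i (p i) -> mu (Wset p i) = 0%E.
Proof.
move=> [w [w0 wz w1 pE]].
have [j0 /andP[j0i wj0]] : exists j0 : 'I_n, (j0 < i)%N && (0 < w j0).
  apply/existsP; apply: contraT; rewrite negb_exists => /forallP hn.
  have : \sum_(j < n) w j = 0.
    apply: big1 => j _; have [ji|ji] := ltnP j i; last by apply: wz; rewrite -leqNgt.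
    have := w0 j; move: (hn j); rewrite ji /= -leNgt => a b.
    by apply/eqP; rewrite eq_le a b.
  by rewrite w1 => /eqP; rewrite oner_eq0.
set m := ev p i j0.
have mu1 := ev_unit pinj j0i.
set mneg : (R*R)%type := (- m.1, - m.2).
have mu2 : dotp mneg mneg = 1 by move: mu1; rewrite /dotp /mneg /= => <-; ring.
set A := [set t : R | 0 <= t < 2 * pi /\ 0 <= dotp (cos t, sin t) m].
set B := [set t : R | 0 <= t < 2 * pi /\ 0 <= dotp (cos t, sin t) mneg].
have mA : measurable A by exact: meas_arc.
have mB : measurable B by exact: meas_arc.
have hp := pi_ge0 R.
have muA : mu A = pi%:E.
  rewrite /A arc_measure //; last by rewrite lexx ler01.
  by rewrite acos0; congr (_%:E); field.
have muB : mu B = pi%:E.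
  rewrite /B arc_measure //; last by rewrite lexx ler01.
  by rewrite acos0; congr (_%:E); field.
have AUB : A `|` B = [set t | 0 <= t < 2 * pi].
  apply/seteqP; split => t /=; first by case => -[].
  move=> ht; have [h|h] := lerP 0 (dotp (cos t, sin t) m); first by left.
  by right; split => //; move: h; rewrite /dotp /mneg /=; lra.
have AIB : mu (A `&` B) = 0%E.
  have Afin : (mu A < +oo)%E by rewrite muA ltry.
  have hU : (mu (A `|` B) = mu A + mu B - mu (A `&` B))%E :=
    @measureUfinl _ _ _ mu A B mA mB Afin.
  have hw : mu [set t : R | 0 <= t < 2 * pi] = (2 * pi - 0)%:E by apply: mu_win; rewrite mulr_ge0.
  move: hU; rewrite AUB hw muA muB.
  have fin : mu (A `&` B) \is a fin_num.
    rewrite ge0_fin_numE ?measure_ge0 //.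
    apply: (le_lt_trans (y := mu A)); last by rewrite muA ltry.
    apply: le_measure; rewrite ?inE; [apply: measurableI; [exact: mA|exact: mB] | exact: mA | by move=> x []].
  rewrite -(fineK fin) -EFinD; case => hh.
  by rewrite -(fineK fin); congr (_%:E); lra.
apply/eqP; rewrite eq_le measure_ge0 andbT -AIB.
apply: le_measure; rewrite ?inE; [exact: meas_W | exact: measurableI |].
move=> t [ht hW].
have S0 : \sum_(j < n) w j * gg p i t j = 0.
  have -> : \sum_(j < n) w j * gg p i t j =
     \sum_(j < n) w j * (cos t * ((p i).1 - (p j).1) + sin t * ((p i).2 - (p j).2)) by [].
  rewrite sum_lin !sum_aff w1 !mulr1.
  have e1 : (p i).1 = \sum_(j < n) w j * (p j).1 by rewrite {1}pE.
  have e2 : (p i).2 = \sum_(j < n) w j * (p j).2 by rewrite {1}pE.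
  by rewrite -e1 -e2 !subrr !mulr0 addr0.
have T0 : forall j : 'I_n, true -> 0 <= w j * gg p i t j.
  move=> j _; have [ji|ji] := ltnP j i.
    by apply: mulr_ge0; [exact: w0 | exact: hW].
  by rewrite wz ?mul0r // -leqNgt.
have : w j0 * gg p i t j0 = 0 by apply: (psumr_eq0P T0 S0).
move/eqP; rewrite mulf_eq0 gt_eqF //= (gg_ev pinj) // mulf_eq0 oppr_eq0 gt_eqF ?(rr_gt0 pinj) //=.
move=> /eqP d0; split; split => //; rewrite ?d0 //.
by move: d0; rewrite /dotp /mneg /= => d0; lra.
Qed.

End H9.

Section H10.
Variable R : realType.
Notation mu := (@lebesgue_measure R).
Variables (n : nat) (p : 'I_n -> pt R) (i : 'I_n).
Hypothesis pinj : injective p.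

Lemma W_nonconv : (0 < i)%N -> ~ in_conv_prefix p i (p i) ->
  mu (Wset p i) = (pi - interior_angle p i)%:E.
Proof.
move=> i0 nconv.
pose j1 : 'I_n := Ordinal (ltn_trans i0 (ltn_ord i)).
have j1i : (j1 < i)%N by [].
pose G (j k : 'I_n) := vangle (vsub (p j) (p i)) (vsub (p k) (p i)).
have Gev (j k : 'I_n) : (j < i)%N -> (k < i)%N -> G j k = acos (dotp (ev p i j) (ev p i k)).
  by move=> ji ki; rewrite /G (vangle_ev pinj).
have unit (j : 'I_n) : (j < i)%N -> dotp (ev p i j) (ev p i j) = 1 by move=> ji; exact: ev_unit.
have db (j k : 'I_n) : (j < i)%N -> (k < i)%N -> -1 <= dotp (ev p i j) (ev p i k) <= 1.
  by move=> ji ki; apply: dot_bound; apply: unit.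
have G0 (j k : 'I_n) : (j < i)%N -> (k < i)%N -> 0 <= G j k.
  by move=> ji ki; rewrite Gev //; apply: acos_ge0; apply: db.
pose F (j : 'I_n) := \big[Num.max/0]_(k < n | (k < i)%N) G j k.
have F0 (j : 'I_n) : (j < i)%N -> 0 <= F j.
  move=> ji; apply: le_trans (G0 j j1 ji j1i) _.
  by apply: (le_bigmax_cond _ (fun k => G j k)).
have IA : interior_angle p i = \big[Num.max/0]_(j < n | (j < i)%N) F j by [].
have [js jsi jsE] := eq_bigmax (x := 0) j1 (fun j : 'I_n => (j < i)%N) F j1i F0.
have [ks ksi ksE] := eq_bigmax (x := 0) j1 (fun k : 'I_n => (k < i)%N) (fun k => G js k) j1i
  (fun k ki => G0 js k jsi ki).
rewrite /= in jsi ksi.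
have IAE : interior_angle p i = G js ks by rewrite IA jsE /F ksE.
have Gle (j k : 'I_n) : (j < i)%N -> (k < i)%N -> G j k <= interior_angle p i.
  move=> ji ki; rewrite IA; apply: le_trans (le_bigmax_cond _ F ji).
  by apply: (le_bigmax_cond _ (fun k => G j k)).
set e1 := ev p i js; set e2 := ev p i ks; set c := dotp e1 e2.
have u1 : dotp e1 e1 = 1 by apply: unit.
have u2 : dotp e2 e2 = 1 by apply: unit.
have cmin (j k : 'I_n) : (j < i)%N -> (k < i)%N -> c <= dotp (ev p i j) (ev p i k).
  move=> ji ki; apply: acos_anti; [exact: db | exact: db |].
  by rewrite -Gev // -/e1 -/e2 -/c -Gev // -IAE; apply: Gle.
have c1 : -1 < c.
  rewrite ltNge; apply/negP => h.
  have cE : c = -1 by apply/eqP; rewrite eq_le h; case/andP: (db _ _ jsi ksi).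
  have sq : (e1.1 + e2.1)^+2 + (e1.2 + e2.2)^+2 = 0.
    have -> : (e1.1 + e2.1)^+2 + (e1.2 + e2.2)^+2 = dotp e1 e1 + dotp e2 e2 + 2 * c.
      by rewrite /c /dotp; ring.
    by rewrite u1 u2 cE; ring.
  have q1 := sqr_ge0 (e1.1 + e2.1); have q2 := sqr_ge0 (e1.2 + e2.2).
  have z1 : e1.1 + e2.1 = 0 by apply/eqP; rewrite -sqrf_eq0; apply/eqP; lra.
  have z2 : e1.2 + e2.2 = 0 by apply/eqP; rewrite -sqrf_eq0; apply/eqP; lra.
  by apply: nconv; apply: (@conv_of_comb _ _ _ _ pinj js ks js 1 1 0) => //; lra.
set mm : (R*R)%type := (- (e1.1 + e2.1), - (e1.2 + e2.2)).
set S := Num.sqrt (1 - c ^+ 2).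
have WE : Wset p i = [set t | 0 <= t < 2 * pi /\ S <= dotp (cos t, sin t) mm].
  apply/seteqP; split => t [ht h]; split => //.
  - set w : (R*R)%type := (- cos t, - sin t).
    have wu : dotp w w = 1 by rewrite /dotp /w /= -(cos2Dsin2 t); ring.
    have gw (l : 'I_n) : (l < i)%N -> gg p i t l = rr p i l * dotp w (ev p i l).
      by move=> li; rewrite (gg_ev pinj) // /dotp /w /=; ring.
    have a1 : 0 <= dotp w e1.
      by have := h js jsi; rewrite gw // pmulr_rge0 // (rr_gt0 pinj).
    have a2 : 0 <= dotp w e2.
      by have := h ks ksi; rewrite gw // pmulr_rge0 // (rr_gt0 pinj).
    have := (two_half u1 u2 wu c1).1 (conj a1 a2).
    by have -> : dotp w e1 + dotp w e2 = dotp (cos t, sin t) mm by rewrite /dotp /w /mm /=; ring.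
  - move=> l li.
    set w : (R*R)%type := (- cos t, - sin t).
    have wu : dotp w w = 1 by rewrite /dotp /w /= -(cos2Dsin2 t); ring.
    have gw : gg p i t l = rr p i l * dotp w (ev p i l).
      by rewrite (gg_ev pinj) // /dotp /w /=; ring.
    have h' : S <= dotp w e1 + dotp w e2.
      by have -> : dotp w e1 + dotp w e2 = dotp (cos t, sin t) mm by rewrite /dotp /w /mm /=; ring.
    have [a1 a2] := (two_half u1 u2 wu c1).2 h'.
    have cl1 : c <= dotp (ev p i l) e1 by apply: cmin.
    have cl2 : c <= dotp (ev p i l) e2 by apply: cmin.
    case: (cone_dichot u1 u2 (unit l li) c1 cl1 cl2).
      move=> [l0 [l1 [l2 [l00 l10 l20 [E1 E2]]]]]; exfalso; apply: nconv.
      apply: (@conv_of_comb _ _ _ _ pinj l js ks l0 l1 l2) => //; lra.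
    move=> /(_ w a1 a2) hw.
    by rewrite gw; apply: mulr_ge0 => //; apply: ltW; apply: (rr_gt0 pinj).
have mm2 : dotp mm mm = 2 + 2 * c.
  have -> : dotp mm mm = dotp e1 e1 + dotp e2 e2 + 2 * c by rewrite /mm /c /dotp /=; ring.
  by rewrite u1 u2.
set L := Num.sqrt (2 + 2 * c).
have rjs : 0 < rr p i js by apply: (rr_gt0 pinj).
have rks : 0 < rr p i ks by apply: (rr_gt0 pinj).
have L0 : 0 < L by rewrite sqrtr_gt0; lra.
set m' : (R*R)%type := (mm.1 / L, mm.2 / L).
have m'u : dotp m' m' = 1.
  have -> : dotp m' m' = dotp mm mm / L ^+ 2 by rewrite /dotp /m' /=; field; rewrite !gt_eqF.
  by rewrite mm2 sqr_sqrtr ?divff //; lra.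
have S0 : 0 <= S by exact: sqrtr_ge0.
have SL : S <= L.
  rewrite ler_sqrt; last lra.
  have := sqr_ge0 (1 + c); nra.
have sb : 0 <= S / L <= 1.
  apply/andP; split; first by rewrite divr_ge0 // ltW.
  by rewrite ler_pdivrMr // mul1r.
have WE2 : Wset p i = [set t | 0 <= t < 2 * pi /\ S / L <= dotp (cos t, sin t) m'].
  rewrite WE; apply/seteqP; split => t [ht h]; split => //.
    have -> : dotp (cos t, sin t) m' = dotp (cos t, sin t) mm / L.
      by rewrite /dotp /m' /=; field; rewrite !gt_eqF.
    by rewrite ler_pM2r // invr_gt0.
  move: h; have -> : dotp (cos t, sin t) m' = dotp (cos t, sin t) mm / L.
    by rewrite /dotp /m' /=; field; rewrite !gt_eqF.
  by rewrite ler_pM2r // invr_gt0.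
rewrite WE2 arc_measure // /S /L half_angle; last by apply/andP; split => //; case/andP: (db _ _ jsi ksi).
by rewrite IAE Gev.
Qed.

End H10.

Unset Implicit Arguments.

Lemma W_tau (R : realType) (n : nat) (p : 'I_n -> pt R) (i : 'I_n) :
  injective p -> (@lebesgue_measure R) (Wset p i) = (tau p i)%:E.
Proof.
move=> pinj; rewrite /tau.
have [i0|i0] := eqVneq (i : nat) 0%N; first by rewrite W_i0.
case: asboolP => h; first exact: W_conv.
by apply: W_nonconv => //; rewrite lt0n.
Qed.

Theorem lemma7 (R : realType) (n : nat) (p : 'I_n -> pt R) :
  injective p ->
  (fun e : R => vis (fun i => scale e (p i))) @ 0^'+ -->
    ((\sum_(i < n) tau p i)%:E).
Proof.
move=> pinj; rewrite -sumEFin /vis.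
apply: cvg_nnesum => j _.
  by apply: nearW => e; exact: measure_ge0.
rewrite -(W_tau _ _ _ j pinj); exact: vis_lim.
Qed.
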